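(* Let $H$ be obtained from a graph $G$ on vertices $v_1,\dots,v_k$ by expanding each $v_i$ by the graph $M_i$. Then the number of minimal separators of $H$ is at most the number of minimal separators of $G$ plus $\sum_{i=1}^k$ (number of minimal separators of $M_i$).
   Context: Expansion: given a graph $G$ on vertices $v_1,\dots,v_k$ and pairwise disjoint graphs $M_i=(V_i,E_i)$, the graph $H$ obtained by expanding each $v_i$ by $M_i$ has vertex set $V_1\cup\dots\cup V_k$ and edge set $E_1\cup\dots\cup E_k\cup\{ab \mid a\in V_i, b\in V_j, v_iv_j\in E(G)\}$. A minimal separator is a set $S$ that, for some vertices $u,v$, separates $u$ from $v$ and is inclusion-minimal with this property. *)

(* Defs.v *)
From mathcomp Require Import all_boot.
Set Implicit Arguments. Unset Strict Implicit. Unset Printing Implicit Defensive.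

Definition simple_graph (T : finType) (e : rel T) : Prop :=
  symmetric e /\ irreflexive e.

Definition avoid_rel (T : finType) (e : rel T) (S : {set T}) : rel T :=
  [rel x y | [&& e x y, x \notin S & y \notin S]].

Definition separates (T : finType) (e : rel T) (S : {set T}) (u v : T) : bool :=
  [&& u \notin S, v \notin S & ~~ connect (avoid_rel e S) u v].

Definition minimal_uv_separator (T : finType) (e : rel T) (S : {set T}) (u v : T) : bool :=
  separates e S u v && [forall S' : {set T}, (S' \proper S) ==> ~~ separates e S' u v].

Definition minimal_separator (T : finType) (e : rel T) (S : {set T}) : bool :=
  [exists u, exists v, minimal_uv_separator e S u v].

Definition num_minimal_separators (T : finType) (e : rel T) : nat :=
  #|[set S : {set T} | minimal_separator e S]|.

(* Expansion of G (vertex type V) where vertex i is replaced by graph (T i, eM i).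
   Vertices of H are dependent pairs (i, x) with x : T i. *)
Definition expansion (V : finType) (eG : rel V) (T : V -> finType)
  (eM : forall i, rel (T i)) : rel {i : V & T i} :=
  [rel a b | ((tag a == tag b) && eM (tag a) (tagged a) (tagged_as a b))
             || eG (tag a) (tag b)].

(* Main.v *)
Require Import Defs.
From mathcomp Require Import all_boot.
Set Implicit Arguments. Unset Strict Implicit. Unset Printing Implicit Defensive.

Lemma card_bigcup_le (I U : finType) (F : I -> {set U}) :
  #|\bigcup_(i : I) F i| <= \sum_(i : I) #|F i|.
Proof.
apply: (big_ind2 (fun (A : {set U}) n => #|A| <= n)) => //.
- by rewrite cards0.
- move=> A1 n1 A2 n2 h1 h2. apply: leq_trans (leq_add h1 h2).
  by rewrite cardsU leq_subr.
Qed.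

Lemma exists_min (U : finType) (e : rel U) (J : {set U}) a b : separates e J a b ->
  exists2 K : {set U}, K \subset J & minimal_uv_separator e K a b.
Proof.
move=> H.
have [K /minsetP [PK minK] KJ] := @minset_exists _ (fun K : {set U} => separates e K a b) J H.
exists K => //; rewrite /minimal_uv_separator PK /=.
apply/forallP => S'; apply/implyP => pS; apply/negP => sS.
have E := minK S' sS (proper_sub pS).
by move: pS; rewrite E properxx.
Qed.

Lemma minimal_eq (U : finType) (e : rel U) (S S' : {set U}) a b :
  minimal_uv_separator e S a b -> S' \subset S -> separates e S' a b -> S' = S.
Proof.
case/andP => _ /forallP m sub sep.
move: sub; rewrite subEproper => /orP [/eqP // | pr].
by have := m S'; rewrite pr sep.
Qed.

Section Exp.
Variables (V : finType) (eG : rel V) (T : V -> finType) (eM : forall i, rel (T i)).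
Hypothesis sG : simple_graph eG.
Local Notation HT := {i : V & T i}.
Local Notation eH := (expansion eG eM).

Lemma Tagged_inj i : injective (@Tagged V i T).
Proof.
move=> x y E; have := congr1 (tagged_as (Tagged T x)) E.
by rewrite !tagged_asE.
Qed.

Definition blocks (K : {set V}) : {set HT} := [set z | tag z \in K].

Lemma project K a b : connect (avoid_rel eH (blocks K)) a b ->
  connect (avoid_rel eG K) (tag a) (tag b).
Proof.
move/connectP => [p]; elim: p a => [|c p IH] a /=; first by move=> _ ->.
case/andP => /and3P [eab na nc] pth lst.
apply: connect_trans (IH c pth lst).
move: na nc; rewrite !inE => na nc.
case/orP: eab => [/andP [/eqP E _] | eg]; first by rewrite E.
by apply: connect1; apply/and3P; split.
Qed.

Definition Nb i : {set HT} := [set z | eG i (tag z)].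

Lemma stay i (Y : {set T i}) (ux : T i) (z : HT) :
  connect (avoid_rel eH (Nb i :|: (@Tagged V i T) @: Y)) (Tagged T ux) z ->
  exists2 zx : T i, z = Tagged T zx & connect (avoid_rel (@eM i) Y) ux zx.
Proof.
move/connectP => [p]; elim/last_ind: p z => [|p c IH] z /=.
  by move=> _ ->; exists ux.
rewrite rcons_path last_rcons => /andP [pth edge] ->.
have [zx E C] := IH _ pth erefl.
move: edge; rewrite E /= => /and3P [ed nz nc].
move: nc ed; case: c => j cx nc ed.
move: nc; rewrite !inE negb_or => /andP [nN nT].
move: nN ed; rewrite /= => nN /orP [|]; last by rewrite (negbTE nN).
move=> /andP [/eqP /= Eij]; subst j; rewrite tagged_asE => ed.

exists cx => //; apply: connect_trans C (connect1 _).
apply/and3P; split.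
- exact: ed.
- apply: contra nz => zY; rewrite inE; apply/orP; right; exact: imset_f.
- apply: contra nT => cY; exact: imset_f.
Qed.

Lemma lift i (Y : {set T i}) (R : {set HT}) (ax bx : T i) :
  (forall x, x \notin Y -> Tagged T x \notin R) ->
  connect (avoid_rel (@eM i) Y) ax bx ->
  connect (avoid_rel eH R) (Tagged T ax) (Tagged T bx).
Proof.
move=> hR; move/connectP => [p]; elim: p ax => [|c p IH] ax /=; first by move=> _ ->.
case/andP => /and3P [ed na nc] pth lst.
apply: connect_trans (IH c pth lst); apply: connect1.
apply/and3P; split; [|exact: hR|exact: hR].
by rewrite /expansion /= eqxx /= tagged_asE ed.
Qed.

End Exp.

Lemma tagK (V : finType) (T : V -> finType) (z : {i : V & T i}) :
  Tagged T (tagged z) = z.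
Proof. by case: z. Qed.

Theorem corollary2 (V : finType) (eG : rel V) (T : V -> finType)
  (eM : forall i, rel (T i)) :
  simple_graph eG -> (forall i, simple_graph (eM i)) ->
  num_minimal_separators (expansion eG eM)
    <= num_minimal_separators eG + \sum_(i : V) num_minimal_separators (eM i).
Proof.
move=> [symG irrG] sM.
pose A := [set blocks T K | K in [set K : {set V} | minimal_separator eG K]].
pose B i := [set Nb eG T i :|: (@Tagged V i T) @: X
              | X : {set T i} in [set X : {set T i} | minimal_separator (@eM i) X]].
have sub : [set S | minimal_separator (expansion eG eM) S]
             \subset A :|: \bigcup_(i : V) B i.
  apply/subsetP => S; rewrite inE => /existsP [u /existsP [v mS]].
  have mS' := mS; case/andP: mS' => /and3P [nu nv nc] _.
  case: (eqVneq (tag u) (tag v)) => Etag.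
  - apply/setUP; right; apply/bigcupP; exists (tag u) => //.
    case: u nu nc Etag mS => i ux nu nc /= Etag mS.
    case: v nv nc Etag mS => j vx nv nc /= Etag mS; subst j.
    have NS : Nb eG T i \subset S.
      apply/subsetP => z; rewrite inE => ez; apply: contraR nc => nzS.
      apply: (@connect_trans _ _ z); apply: connect1;
        (apply/and3P; split => //; rewrite /expansion /=).
      - by rewrite ez orbT.
      - by rewrite symG ez orbT.
    pose X := [set x : T i | Tagged T x \in S].
    have XS : Nb eG T i :|: Tagged T @: X \subset S.
      apply/subsetP => z /setUP [/(subsetP NS) //|/imsetP [x]].
      by rewrite inE => xS ->.
    have noNi : forall x : T i, Tagged T x \notin Nb eG T i.
      by move=> x; rewrite inE /= irrG.
    have Sep : forall Y : {set T i}, Y \subset X ->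
        ~~ connect (avoid_rel (@eM i) Y) ux vx ->
        separates (expansion eG eM) (Nb eG T i :|: Tagged T @: Y)
          (Tagged T ux) (Tagged T vx).
      move=> Y YX ncY; apply/and3P; split.
      - rewrite inE negb_or noNi (mem_imset _ _ (@Tagged_inj _ _ i)).
        by apply: contra nu => /(subsetP YX); rewrite inE.
      - rewrite inE negb_or noNi (mem_imset _ _ (@Tagged_inj _ _ i)).
        by apply: contra nv => /(subsetP YX); rewrite inE.
      - apply/negP => /stay [vx' /Tagged_inj <-]; exact/negP.
    have XsepM : ~~ connect (avoid_rel (@eM i) X) ux vx.
      apply: contra nc => /(lift eG (R := S)); apply.
      by move=> x; rewrite inE.
    have ES := minimal_eq mS XS (Sep X (subxx _) XsepM).
    apply/imsetP; exists X; last by rewrite ES.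
    rewrite inE; apply/existsP; exists ux; apply/existsP; exists vx.
    apply/andP; split; first by apply/and3P; split; rewrite ?inE.
    apply/forallP => X'; apply/implyP => pX'; apply/negP => /and3P [_ _ ncx].
    have sX' := proper_sub pX'.
    have sep'' := Sep X' sX' ncx.
    have E'' := minimal_eq mS (subset_trans (setUS _ (imsetS _ sX')) XS) sep''.
    case/properP: pX' => _ [x xX nxX'].
    have : Tagged T x \in Nb eG T i :|: Tagged T @: X by rewrite inE imset_f ?orbT.
    rewrite ES -E'' inE (negbTE (noNi x)) /=.
    by rewrite (mem_imset _ _ (@Tagged_inj _ _ i)) (negbTE nxX').
  - apply/setUP; left.
    pose J := [set j | [forall x : T j, Tagged T x \in S]].
    have Pstep : forall j, connect (avoid_rel eG J) (tag u) j ->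
        j = tag u \/ forall z, tag z = j -> z \notin S ->
                      connect (avoid_rel (expansion eG eM) S) u z.
      move=> j /connectP [p]; elim/last_ind: p j => [|p c IH] j /=.
        by move=> _ ->; left.
      rewrite rcons_path last_rcons => /andP [pth /and3P [ed nj nc']] ->.
      right => z Ez nzS.
      case: (IH _ pth erefl) => [Ej | Hj].
      + apply: connect1; apply/and3P; split => //.
        by rewrite /expansion /=; apply/orP; right; rewrite Ez -Ej.
      + move: nj; rewrite inE negb_forall => /existsP [x nx].
        apply: connect_trans (Hj (Tagged T x) erefl nx) (connect1 _).
        apply/and3P; split => //.
        by rewrite /expansion /=; apply/orP; right; rewrite Ez.
    have sepJ : separates eG J (tag u) (tag v).
      apply/and3P; split.
      - rewrite inE negb_forall; apply/existsP; exists (tagged u); by rewrite tagK.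
      - rewrite inE negb_forall; apply/existsP; exists (tagged v); by rewrite tagK.
      - apply/negP => /Pstep [Ev|Hv]; first by move: Etag; rewrite Ev eqxx.
        by move/negP: nc; apply; apply: Hv.
    have [K KJ mK] := exists_min sepJ.
    have sepK : separates (expansion eG eM) (blocks T K) u v.
      case/andP: mK => /and3P [nuK nvK ncK] _.
      apply/and3P; split; rewrite ?inE //.
      by apply: contra ncK => /project.
    have KS : blocks T K \subset S.
      apply/subsetP => z; rewrite inE => /(subsetP KJ); rewrite inE.
      by move/forallP/(_ (tagged z)); rewrite tagK.
    have E := minimal_eq mS KS sepK.
    apply/imsetP; exists K; last by rewrite E.
    rewrite inE; apply/existsP; exists (tag u); apply/existsP; exists (tag v); exact mK.
rewrite /num_minimal_separators.
apply: leq_trans (subset_leq_card sub) _.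
rewrite cardsU; apply: leq_trans (leq_subr _ _) _.
apply: leq_add; first exact: leq_imset_card.
apply: leq_trans (card_bigcup_le _) _.
apply: leq_sum => i _; exact: leq_imset_card.
Qed.
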